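(* Let $D\subseteq\mathbb{R}^3\setminus\{0\}$ be open, $\Omega=\mathbb{R}^3\times D$, and $\vec\mu(\vec M,\vec\gamma)=(0,0,\mu_3(\vec\gamma,\vec M\cdot\vec\gamma))$ with $\mu_3:D\times\mathbb{R}\to\mathbb{R}$ smooth. Then $\Pi_{\vec\mu}$ defines a Poisson bracket on $\Omega$ if and only if $\gamma_1\frac{\partial\mu_3}{\partial\gamma_2}-\gamma_2\frac{\partial\mu_3}{\partial\gamma_1}=0$ on $D\times\mathbb{R}$ (derivatives with $s=\vec M\cdot\vec\gamma$ held fixed). Moreover, if $\mu_3=\beta(\gamma_3)\delta(s)$ with $\beta$, $\delta$ smooth and $\delta$ nowhere zero, then $\Pi_{\vec\mu}$ defines a Poisson bracket and $C=\Delta(\vec M\cdot\vec\gamma)+B(\gamma_3)$, where $\Delta'=1/\delta$ and $B'=\beta$, is a Casimir function of $\Pi_{\vec\mu}$.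
   Context: Coordinates on $\mathbb{R}^6$ are $(\vec M,\vec\gamma)=(M_1,M_2,M_3,\gamma_1,\gamma_2,\gamma_3)$. For a smooth $\vec\mu=(\mu_1,\mu_2,\mu_3)$ of $(\vec M,\vec\gamma)$, $\Pi_{\vec\mu}$ is the skew-symmetric $6\times6$ matrix $$\Pi_{\vec\mu}=\begin{bmatrix}0&-M_3-\mu_3&M_2+\mu_2&0&-\gamma_3&\gamma_2\\ M_3+\mu_3&0&-M_1-\mu_1&\gamma_3&0&-\gamma_1\\ -M_2-\mu_2&M_1+\mu_1&0&-\gamma_2&\gamma_1&0\\ 0&-\gamma_3&\gamma_2&0&0&0\\ \gamma_3&0&-\gamma_1&0&0&0\\ -\gamma_2&\gamma_1&0&0&0&0\end{bmatrix},$$ it ''defines a Poisson bracket'' if $\{f,g\}_{\vec\mu}=(\nabla f)^T\Pi_{\vec\mu}\nabla g$ satisfies the Jacobi identity, and a Casimir function is a smooth $C$ with $\Pi_{\vec\mu}\nabla C=0$. *)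

(* Defs.v *)
From Stdlib Require Import Reals ClassicalEpsilon.
Open Scope R_scope.

(** Points of R^n are modelled as [nat -> R]; only coordinates [i < n] matter. *)
Definition pt := nat -> R.

Fixpoint sumR (n : nat) (f : nat -> R) : R :=
  match n with O => 0 | S k => sumR k f + f k end.

Definition distn (n : nat) (x y : pt) : R := sumR n (fun i => Rabs (x i - y i)).

Definition is_open (n : nat) (U : pt -> Prop) : Prop :=
  forall x, U x -> exists e, 0 < e /\ forall y, distn n x y < e -> U y.

Definition cont_on (n : nat) (U : pt -> Prop) (f : pt -> R) : Prop :=
  forall x, U x -> forall eps, 0 < eps ->
    exists d, 0 < d /\ forall y, U y -> distn n x y < d -> Rabs (f y - f x) < eps.

Definition upd (x : pt) (i : nat) (t : R) : pt :=
  fun j => if Nat.eqb j i then t else x j.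

Definition partial_at (f : pt -> R) (i : nat) (x : pt) (l : R) : Prop :=
  derivable_pt_lim (fun t => f (upd x i t)) (x i) l.

(** The i-th partial derivative of f at x (meaningful when it exists,
    where it is unique). *)
Definition pd (f : pt -> R) (i : nat) (x : pt) : R :=
  epsilon (inhabits 0) (fun l => partial_at f i x l).

(** C^infinity on an open set U of R^n: there is a family of continuous
    functions F l (l = list of differentiation indices, most recent first)
    with F nil = f on U and d/dx_i (F l) = F (i :: l) on U. *)
Definition smooth_on (n : nat) (U : pt -> Prop) (f : pt -> R) : Prop :=
  exists F : list nat -> pt -> R,
    (forall x, U x -> F nil x = f x) /\
    (forall l, cont_on n U (F l)) /\
    (forall l i x, (i < n)%nat -> U x -> partial_at (F l) i x (F (cons i l) x)).

Definition smooth1 (f : R -> R) : Prop :=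
  exists F : nat -> R -> R,
    (forall x, F O x = f x) /\ (forall k x, derivable_pt_lim (F k) x (F (S k) x)).

Definition pbracket (n : nat) (Pi : nat -> nat -> pt -> R) (f g : pt -> R) (x : pt) : R :=
  sumR n (fun i => sumR n (fun j => pd f i x * Pi i j x * pd g j x)).

Definition defines_Poisson (n : nat) (U : pt -> Prop) (Pi : nat -> nat -> pt -> R) : Prop :=
  forall f g h, smooth_on n U f -> smooth_on n U g -> smooth_on n U h ->
    forall x, U x ->
      pbracket n Pi f (pbracket n Pi g h) x
      + pbracket n Pi g (pbracket n Pi h f) x
      + pbracket n Pi h (pbracket n Pi f g) x = 0.

Definition is_Casimir (n : nat) (U : pt -> Prop) (Pi : nat -> nat -> pt -> R) (C : pt -> R) : Prop :=
  smooth_on n U C /\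
  forall x, U x -> forall i, (i < n)%nat -> sumR n (fun j => Pi i j x * pd C j x) = 0.

(** Coordinates on R^6: x 0, x 1, x 2 = M1, M2, M3 ; x 3, x 4, x 5 = g1, g2, g3. *)
Definition PiMu (mu1 mu2 mu3 : pt -> R) (i j : nat) (x : pt) : R :=
  let M1 := x 0%nat in let M2 := x 1%nat in let M3 := x 2%nat in
  let g1 := x 3%nat in let g2 := x 4%nat in let g3 := x 5%nat in
  match i, j with
  | 0%nat, 1%nat => - (M3 + mu3 x) | 0%nat, 2%nat => M2 + mu2 x | 0%nat, 4%nat => - g3 | 0%nat, 5%nat => g2
  | 1%nat, 0%nat => M3 + mu3 x | 1%nat, 2%nat => - (M1 + mu1 x) | 1%nat, 3%nat => g3 | 1%nat, 5%nat => - g1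
  | 2%nat, 0%nat => - (M2 + mu2 x) | 2%nat, 1%nat => M1 + mu1 x | 2%nat, 3%nat => - g2 | 2%nat, 4%nat => g1
  | 3%nat, 1%nat => - g3 | 3%nat, 2%nat => g2
  | 4%nat, 0%nat => g3 | 4%nat, 2%nat => - g1
  | 5%nat, 0%nat => - g2 | 5%nat, 1%nat => g1
  | _, _ => 0
  end.

Definition restr (k : nat) (p : pt) : pt := fun j => if Nat.ltb j k then p j else 0.

(** Omega = R^3 x D inside R^6 (gamma = coordinates 3,4,5). *)
Definition Omega (D : pt -> Prop) : pt -> Prop :=
  fun x => D (restr 3 (fun k => x (3 + k)%nat)).

(** D x R inside R^4, coordinates (g1, g2, g3, s). *)
Definition DxR (D : pt -> Prop) : pt -> Prop := fun p => D (restr 3 p).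

Definition Mdotg (x : pt) : R := x 0%nat * x 3%nat + x 1%nat * x 4%nat + x 2%nat * x 5%nat.

Definition gs (x : pt) : pt :=
  fun k => match k with
           | 0%nat => x 3%nat | 1%nat => x 4%nat | 2%nat => x 5%nat
           | 3%nat => Mdotg x | _ => 0
           end.

Definition PiMu3 (mu3 : pt -> R) : nat -> nat -> pt -> R :=
  PiMu (fun _ => 0) (fun _ => 0) (fun x => mu3 (gs x)).

(* Main.v *)
Require Import Defs.
From Stdlib Require Import Reals ClassicalEpsilon.
From Stdlib Require Import Lra Lia FunctionalExtensionality Ranalysis1 Ranalysis3 MVT.
Open Scope R_scope.

Lemma dext f g x l1 l2 : (forall t, f t = g t) -> l1 = l2 ->
  derivable_pt_lim f x l1 -> derivable_pt_lim g x l2.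
Proof. intros H E D. subst. eapply derivable_pt_lim_ext; eauto. Qed.

Lemma dval f x l1 l2 : l1 = l2 -> derivable_pt_lim f x l1 -> derivable_pt_lim f x l2.
Proof. intros; subst; auto. Qed.

Lemma dconst c x : derivable_pt_lim (fun _ => c) x 0.
Proof. exact (derivable_pt_lim_const c x). Qed.

Lemma did x : derivable_pt_lim (fun t => t) x 1.
Proof. exact (derivable_pt_lim_id x). Qed.

Lemma dplus f g x l1 l2 : derivable_pt_lim f x l1 -> derivable_pt_lim g x l2 ->
  derivable_pt_lim (fun t => f t + g t) x (l1 + l2).
Proof. intros; apply (derivable_pt_lim_plus f g); auto. Qed.

Lemma dmult f g x l1 l2 : derivable_pt_lim f x l1 -> derivable_pt_lim g x l2 ->
  derivable_pt_lim (fun t => f t * g t) x (l1 * g x + f x * l2).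
Proof. intros; apply (derivable_pt_lim_mult f g); auto. Qed.

Lemma dopp f x l : derivable_pt_lim f x l -> derivable_pt_lim (fun t => - f t) x (- l).
Proof. intros; apply (derivable_pt_lim_opp f); auto. Qed.

Lemma dcomp f g x l1 l2 : derivable_pt_lim f x l1 -> derivable_pt_lim g (f x) l2 ->
  derivable_pt_lim (fun t => g (f t)) x (l2 * l1).
Proof. intros; apply (derivable_pt_lim_comp f g); auto. Qed.

Lemma dsum n (f : nat -> R -> R) (f' : nat -> R) x :
  (forall k, (k < n)%nat -> derivable_pt_lim (f k) x (f' k)) ->
  derivable_pt_lim (fun t => sumR n (fun k => f k t)) x (sumR n f').
Proof.
  induction n; intros H; simpl.
  - apply dconst.
  - apply dplus. apply IHn; intros; apply H; lia. apply H; lia.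
Qed.

Lemma sumR_ext n f g : (forall k, (k < n)%nat -> f k = g k) -> sumR n f = sumR n g.
Proof.
  induction n; intros H; simpl; auto. rewrite IHn, H; auto; intros; apply H; lia.
Qed.

Lemma pd_eq f i x l : partial_at f i x l -> pd f i x = l.
Proof.
  intros H. unfold pd.
  pose proof (epsilon_spec (inhabits 0) (fun l => partial_at f i x l) (ex_intro _ l H)) as H1.
  eapply uniqueness_limite; eauto.
Qed.

Lemma upd_eq x i t : upd x i t i = t.
Proof. unfold upd. rewrite Nat.eqb_refl. auto. Qed.
Lemma upd_neq x i j t : j <> i -> upd x i t j = x j.
Proof. intros H. unfold upd. destruct (Nat.eqb_spec j i); auto; lia. Qed.
Lemma upd_same x i : upd x i (x i) = x.
Proof. extensionality j. unfold upd. destruct (Nat.eqb_spec j i); subst; auto. Qed.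
Lemma upd_upd_same x i s t : upd (upd x i s) i t = upd x i t.
Proof. extensionality j. unfold upd. destruct (Nat.eqb_spec j i); auto. Qed.
Lemma upd_comm x i j s t : i <> j -> upd (upd x i s) j t = upd (upd x j t) i s.
Proof. intros H. extensionality k. unfold upd.
  destruct (Nat.eqb_spec k j); destruct (Nat.eqb_spec k i); subst; auto; lia. Qed.

Lemma distn_upd n x i t :
  distn n x (upd x i t) = if Nat.ltb i n then Rabs (x i - t) else 0.
Proof.
  unfold distn. induction n; simpl. auto.
  rewrite IHn. unfold upd.
  destruct (Nat.eqb_spec n i); subst.
  - replace (Nat.ltb i i) with false by (symmetry; apply Nat.ltb_irrefl).
    replace (Nat.ltb i (S i)) with true by (symmetry; apply Nat.ltb_lt; lia). ring.
  - replace (x n - x n) with 0 by ring. rewrite Rabs_R0.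
    destruct (Nat.ltb_spec i n); destruct (Nat.ltb_spec i (S n)); try lia; ring.
Qed.

Lemma distn_upd_le n x i t : distn n x (upd x i t) <= Rabs (x i - t).
Proof. rewrite distn_upd. destruct (Nat.ltb i n). lra. apply Rabs_pos. Qed.

Lemma distn_triang n x y z : distn n x z <= distn n x y + distn n y z.
Proof.
  unfold distn. induction n; simpl. lra.
  pose proof (Rabs_triang (x n - y n) (y n - z n)).
  replace (x n - y n + (y n - z n)) with (x n - z n) in H by ring. lra.
Qed.

Lemma distn_sym n x y : distn n x y = distn n y x.
Proof. unfold distn. induction n; simpl; auto. rewrite IHn, Rabs_minus_sym. auto. Qed.

Lemma distn_coord n x y a : (a < n)%nat -> Rabs (x a - y a) <= distn n x y.
Proof.
  unfold distn. induction n; intros H; simpl. lia.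
  destruct (Nat.eq_dec a n).
  - subst. assert (0 <= sumR n (fun i => Rabs (x i - y i))).
    { clear. induction n; simpl. lra. pose proof (Rabs_pos (x n - y n)). lra. }
    lra.
  - pose proof (Rabs_pos (x n - y n)). assert (a < n)%nat by lia. specialize (IHn H1). lra.
Qed.

Lemma distn_nonneg n x y : 0 <= distn n x y.
Proof. unfold distn. induction n; simpl. lra. pose proof (Rabs_pos (x n - y n)). lra. Qed.

Lemma distn_upd2 n x i j s t :
  distn n x (upd (upd x i s) j t) <= Rabs (x i - s) + Rabs (x j - t).
Proof.
  destruct (Nat.eq_dec i j).
  - subst. rewrite upd_upd_same. pose proof (distn_upd_le n x j t). pose proof (Rabs_pos (x j - s)). lra.
  - eapply Rle_trans. apply (distn_triang n x (upd x i s)).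
    pose proof (distn_upd_le n x i s). pose proof (distn_upd_le n (upd x i s) j t).
    rewrite upd_neq in H0 by auto. lra.
Qed.

Lemma open_upd2 n U x i j : is_open n U -> U x ->
  exists r, 0 < r /\ forall s t, Rabs (s - x i) < r -> Rabs (t - x j) < r -> U (upd (upd x i s) j t).
Proof.
  intros HU Hx. destruct (HU x Hx) as [e [He H]]. exists (e/2). split. lra.
  intros s t Hs Ht. apply H. pose proof (distn_upd2 n x i j s t).
  rewrite Rabs_minus_sym in Hs, Ht. lra.
Qed.

Lemma open_upd n U x i : is_open n U -> U x ->
  exists r, 0 < r /\ forall t, Rabs (t - x i) < r -> U (upd x i t).
Proof.
  intros HU Hx. destruct (open_upd2 n U x i i HU Hx) as [r [Hr H]]. exists r. split; auto.
  intros t Ht. rewrite <- (upd_upd_same x i t t). apply H; auto.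
Qed.

Lemma partial_local n U f g i x l : is_open n U -> U x -> (forall y, U y -> f y = g y) ->
  partial_at f i x l -> partial_at g i x l.
Proof.
  intros HU Hx Hfg H. destruct (open_upd n U x i HU Hx) as [r [Hr Hu]].
  unfold partial_at in *. apply (derivable_pt_lim_locally_ext (fun t => f (upd x i t)) (fun t => g (upd x i t)) _ (x i - r) (x i + r) l).
  lra. intros z Hz. apply Hfg, Hu. apply Rabs_def1; lra. auto.
Qed.

Lemma smooth_pd n U f F i x : is_open n U -> U x -> (i < n)%nat ->
  (forall y, U y -> F nil y = f y) ->
  (forall l i x, (i < n)%nat -> U x -> partial_at (F l) i x (F (cons i l) x)) ->
  pd f i x = F (cons i nil) x.
Proof.
  intros HU Hx Hi H0 H2. apply pd_eq. eapply partial_local; eauto.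
Qed.

Lemma mvt_h (f f' : R -> R) a h : h <> 0 ->
  (forall c, Rabs (c - a) <= Rabs h -> derivable_pt_lim f c (f' c)) ->
  exists c, Rabs (c - a) < Rabs h /\ f (a + h) - f a = f' c * h.
Proof.
  intros Hh H. destruct (Rlt_or_le 0 h) as [Hp|Hn].
  - destruct (MVT_cor2 f f' a (a+h)) as [c [E Hc]]. lra.
    { intros c Hc. apply H. rewrite (Rabs_right h) by lra. rewrite Rabs_right by lra. lra. }
    exists c. split. rewrite (Rabs_right h) by lra. rewrite Rabs_right by lra. lra.
    rewrite E. ring.
  - assert (h < 0) by lra.
    destruct (MVT_cor2 f f' (a+h) a) as [c [E Hc]]. lra.
    { intros c Hc. apply H. rewrite (Rabs_left h) by lra. rewrite Rabs_left1 by lra. lra. }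
    exists c. split. rewrite (Rabs_left h) by lra. rewrite Rabs_left by lra. lra.
    replace (f (a + h) - f a) with (- (f a - f (a+h))) by ring. rewrite E. ring.
Qed.

Lemma deriv_cont f x l : derivable_pt_lim f x l ->
  forall eps, 0 < eps -> exists d, 0 < d /\ forall y, Rabs (y - x) < d -> Rabs (f y - f x) < eps.
Proof.
  intros H eps He.
  assert (C : continuity_pt f x) by (apply derivable_continuous_pt; exists l; auto).
  destruct (C eps He) as [d [Hd Hy]]. exists d. split. lra.
  intros y Hyd. destruct (Req_dec y x). subst. replace (f x - f x) with 0 by ring. rewrite Rabs_R0; auto.
  apply (Hy y). split. split. exact I. auto. exact Hyd.
Qed.

Definition cont2 (Q : R -> R -> R) a b := forall eps, 0 < eps ->
  exists d, 0 < d /\ forall s t, Rabs (s - a) < d -> Rabs (t - b) < d -> Rabs (Q s t - Q a b) < eps.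

Lemma schwarz2 (phi P P' Q Q' : R -> R -> R) a b r : 0 < r ->
  (forall s t, Rabs (s - a) < r -> Rabs (t - b) < r -> derivable_pt_lim (fun s' => phi s' t) s (P s t)) ->
  (forall s t, Rabs (s - a) < r -> Rabs (t - b) < r -> derivable_pt_lim (fun t' => P s t') t (Q s t)) ->
  (forall s t, Rabs (s - a) < r -> Rabs (t - b) < r -> derivable_pt_lim (fun t' => phi s t') t (P' s t)) ->
  (forall s t, Rabs (s - a) < r -> Rabs (t - b) < r -> derivable_pt_lim (fun s' => P' s' t) s (Q' s t)) ->
  cont2 Q a b -> cont2 Q' a b -> Q a b = Q' a b.
Proof.
  intros Hr H1 H2 H3 H4 CQ CQ'.
  destruct (Req_dec (Q a b) (Q' a b)) as [|Hne]; auto. exfalso.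
  assert (Hlt : 0 < Rabs (Q a b - Q' a b)) by (apply Rabs_pos_lt; lra).
  set (eps := Rabs (Q a b - Q' a b)) in *.
  destruct (CQ (eps/2)) as [d1 [Hd1 C1]]. lra.
  destruct (CQ' (eps/2)) as [d2 [Hd2 C2]]. lra.
  set (h := Rmin r (Rmin d1 d2) / 2).
  assert (Hh0 : 0 < h). { unfold h.
    assert (0 < Rmin r (Rmin d1 d2)) by (apply Rmin_pos; auto; apply Rmin_pos; auto). lra. }
  assert (Hhr : h < r). { unfold h. pose proof (Rmin_l r (Rmin d1 d2)). lra. }
  assert (Hhd1 : h < d1). { unfold h. pose proof (Rmin_r r (Rmin d1 d2)). pose proof (Rmin_l d1 d2).
     pose proof (Rmin_l r (Rmin d1 d2)). assert (0 < Rmin r (Rmin d1 d2)) by (apply Rmin_pos; auto; apply Rmin_pos; auto). lra. }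
  assert (Hhd2 : h < d2). { unfold h. pose proof (Rmin_r r (Rmin d1 d2)). pose proof (Rmin_r d1 d2).
     assert (0 < Rmin r (Rmin d1 d2)) by (apply Rmin_pos; auto; apply Rmin_pos; auto). lra. }
  assert (Ah : Rabs h = h) by (apply Rabs_right; lra).
  assert (hn0 : h <> 0) by lra.
  destruct (mvt_h (fun s => phi s (b+h) - phi s b) (fun s => P s (b+h) - P s b) a h hn0) as [xi [Hxi E1]].
  { intros c Hc. apply dplus. apply H1; rewrite ?Ah in *; try lra.
    replace (b + h - b) with h by ring; rewrite Ah; lra.
    apply dopp. apply H1; rewrite ?Ah in *; try lra. replace (b - b) with 0 by ring; rewrite Rabs_R0; lra. }
  destruct (mvt_h (fun t => P xi t) (fun t => Q xi t) b h hn0) as [eta [Heta E2]].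
  { intros c Hc. rewrite Ah in *. apply H2; lra. }
  destruct (mvt_h (fun t => phi (a+h) t - phi a t) (fun t => P' (a+h) t - P' a t) b h hn0) as [eta' [Heta' E3]].
  { intros c Hc. rewrite Ah in *. apply dplus. apply H3; try lra.
    replace (a + h - a) with h by ring; rewrite Ah; lra.
    apply dopp. apply H3; try lra. replace (a - a) with 0 by ring; rewrite Rabs_R0; lra. }
  destruct (mvt_h (fun s => P' s eta') (fun s => Q' s eta') a h hn0) as [xi' [Hxi' E4]].
  { intros c Hc. rewrite Ah in *. apply H4; lra. }
  simpl in E1, E2, E3, E4. rewrite Ah in *.
  assert (E : Q xi eta * h * h = Q' xi' eta' * h * h).
  { rewrite <- E2, <- E4. rewrite <- E1. rewrite <- E3. ring. }
  assert (E' : Q xi eta = Q' xi' eta').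
  { apply Rmult_eq_reg_r with (h*h). rewrite <- !Rmult_assoc. auto. nra. }
  specialize (C1 xi eta ltac:(lra) ltac:(lra)). specialize (C2 xi' eta' ltac:(lra) ltac:(lra)).
  rewrite E' in C1.
  pose proof (Rabs_triang (Q a b - Q' xi' eta') (Q' xi' eta' - Q' a b)).
  replace (Q a b - Q' xi' eta' + (Q' xi' eta' - Q' a b)) with (Q a b - Q' a b) in H by ring.
  rewrite Rabs_minus_sym in C1. fold eps in H. lra.
Qed.

Lemma chain2 (phi A : R -> R -> R) Bv a b c r : 0 < r ->
  (forall t u, Rabs (t - a) < r -> derivable_pt_lim (fun t' => phi t' u) t (A t u)) ->
  derivable_pt_lim (fun u => phi a u) b Bv ->
  cont2 A a b ->
  derivable_pt_lim (fun t => phi t (b + c * (t - a))) a (A a b + c * Bv).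
Proof.
  intros Hr HA HB CA eps He.
  destruct (CA (eps/2)) as [d1 [Hd1 C1]]. lra.
  assert (HG : derivable_pt_lim (fun h => phi a (b + c * h)) 0 (Bv * c)).
  { assert (L : derivable_pt_lim (fun h => b + c * h) 0 c).
    { eapply dval; [|apply dplus; [apply dconst|apply (dmult (fun _ => c) (fun t => t)); [apply dconst|apply did]]].
      ring. }
    pose proof (dcomp (fun h => b + c * h) (fun u => phi a u) 0 c Bv L) as HH.
    simpl in HH. replace (b + c * 0) with b in HH by ring. apply HH. auto. }
  destruct (HG (eps/2)) as [d2 HG2]. lra.
  set (K := 1 + Rabs c).
  assert (HK : 0 < K) by (unfold K; pose proof (Rabs_pos c); lra).
  set (dd := Rmin r (Rmin (d1 / K) d2)).
  assert (Hdd : 0 < dd). { unfold dd. apply Rmin_pos; auto. apply Rmin_pos. apply Rdiv_lt_0_compat; auto. apply cond_pos. }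
  exists (mkposreal dd Hdd). simpl. intros h hn0 Hh.
  assert (Hh1 : Rabs h < r) by (eapply Rlt_le_trans; [exact Hh|apply Rmin_l]).
  assert (Hh2 : Rabs h < d1 / K) by (eapply Rlt_le_trans; [exact Hh|]; unfold dd; eapply Rle_trans; [apply Rmin_r|apply Rmin_l]).
  assert (Hh3 : Rabs h < d2) by (eapply Rlt_le_trans; [exact Hh|]; unfold dd; eapply Rle_trans; [apply Rmin_r|apply Rmin_r]).
  assert (Hh4 : Rabs h * K < d1). { apply (Rmult_lt_compat_r K) in Hh2; auto. unfold Rdiv in Hh2.
    rewrite Rmult_assoc, Rinv_l in Hh2 by lra. lra. }
  set (u := b + c * h).
  destruct (mvt_h (fun t => phi t u) (fun t => A t u) a h hn0) as [xi [Hxi E]].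
  { intros cc Hc. apply HA. lra. }
  simpl in E.
  replace (b + c * (a + h - a)) with u by (unfold u; ring).
  replace (b + c * (a - a)) with b by ring.
  replace ((phi (a + h) u - phi a b) / h - (A a b + c * Bv))
    with ((A xi u - A a b) + ((phi a (b + c * h) - phi a (b + c * 0)) / h - Bv * c)).
  2: { replace (b + c * 0) with b by ring. fold u.
       replace (phi (a + h) u - phi a b) with ((phi (a+h) u - phi a u) + (phi a u - phi a b)) by ring.
       rewrite E. field. auto. }
  specialize (HG2 h hn0 Hh3). rewrite Rplus_0_l in HG2.
  assert (HC : Rabs (A xi u - A a b) < eps / 2).
  { apply C1. unfold K in Hh4; pose proof (Rabs_pos c); pose proof (Rabs_pos h); nra. unfold u. replace (b + c * h - b) with (c * h) by ring. rewrite Rabs_mult.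
    unfold K in Hh4. pose proof (Rabs_pos c). pose proof (Rabs_pos h). nra. }
  pose proof (Rabs_triang (A xi u - A a b) ((phi a (b + c * h) - phi a (b + c * 0)) / h - Bv * c)).
  lra.
Qed.

Lemma partial_line f i z l s g : partial_at f i z l -> z i = s ->
  (forall u, f (upd z i u) = g u) -> derivable_pt_lim g s l.
Proof. intros H E G. subst. unfold partial_at in H. eapply dext; [exact G|reflexivity|exact H]. Qed.

Lemma upd_ij_i x i j s t u : i <> j -> upd (upd (upd x i s) j t) i u = upd (upd x i u) j t.
Proof. intros H. extensionality k. unfold upd.
  destruct (Nat.eqb_spec k i); destruct (Nat.eqb_spec k j); subst; auto; lia. Qed.

Lemma cont2_of n U G x i j : is_open n U -> U x -> cont_on n U G ->
  cont2 (fun s t => G (upd (upd x i s) j t)) (x i) (x j).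
Proof.
  intros HU Hx HG eps He. destruct (HG x Hx eps He) as [d [Hd Hc]].
  destruct (open_upd2 n U x i j HU Hx) as [r [Hr Hu]].
  exists (Rmin r (d/2)). split. apply Rmin_pos; lra.
  intros s t Hs Ht. rewrite !upd_same.
  pose proof (Rmin_l r (d/2)). pose proof (Rmin_r r (d/2)).
  apply Hc. apply Hu; lra.
  pose proof (distn_upd2 n x i j s t). rewrite (Rabs_minus_sym (x i)), (Rabs_minus_sym (x j)) in H1. lra.
Qed.

Lemma smooth_schwarz n U (F : list nat -> pt -> R) x i j : is_open n U -> U x ->
  (i < n)%nat -> (j < n)%nat -> (forall l, cont_on n U (F l)) ->
  (forall l i x, (i < n)%nat -> U x -> partial_at (F l) i x (F (cons i l) x)) ->
  F (cons j (cons i nil)) x = F (cons i (cons j nil)) x.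
Proof.
  intros HU Hx Hi Hj HC HD.
  destruct (Nat.eq_dec i j) as [->|Hij]. reflexivity.
  destruct (open_upd2 n U x i j HU Hx) as [r [Hr Hu]].
  set (y := fun s t => upd (upd x i s) j t).
  assert (Ey : forall s t, y s t i = s) by (intros; unfold y; rewrite upd_neq by auto; apply upd_eq).
  assert (Ey' : forall s t, y s t j = t) by (intros; unfold y; apply upd_eq).
  pose proof (schwarz2 (fun s t => F nil (y s t)) (fun s t => F (cons i nil) (y s t))
     (fun s t => F (cons j nil) (y s t)) (fun s t => F (cons j (cons i nil)) (y s t))
     (fun s t => F (cons i (cons j nil)) (y s t)) (x i) (x j) r Hr) as S.
  simpl in S. unfold y in S. rewrite !upd_same in S. apply S; clear S.
  - intros s t Hs Ht. eapply partial_line. apply HD; [auto | apply Hu; auto].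
    apply Ey. intros u. unfold y. rewrite upd_ij_i; auto.
  - intros s t Hs Ht. eapply partial_line. apply HD; [auto | apply Hu; auto].
    apply Ey'. intros u. unfold y. rewrite upd_upd_same; auto.
  - intros s t Hs Ht. eapply partial_line. apply HD; [auto | apply Hu; auto].
    apply Ey'. intros u. unfold y. rewrite upd_upd_same; auto.
  - intros s t Hs Ht. eapply partial_line. apply HD; [auto | apply Hu; auto].
    apply Ey. intros u. unfold y. rewrite upd_ij_i; auto.
  - apply (cont2_of n U); auto.
  - apply (cont2_of n U); auto.
Qed.
Definition Pm (m:R) (x:pt) (i j:nat) : R := PiMu (fun _ => 0) (fun _ => 0) (fun _ => m) i j x.
Definition evec (j:nat) : pt := fun r => if Nat.eqb r j then 1 else 0.
Definition dmu (m0 m1 m2 m3 : R) (x:pt) (j:nat) : R :=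
  match j with 0 => x 3%nat * m3 | 1 => x 4%nat * m3 | 2 => x 5%nat * m3
  | 3 => m0 + x 0%nat * m3 | 4 => m1 + x 1%nat * m3 | 5 => m2 + x 2%nat * m3 | _ => 0 end.
Definition dPm m0 m1 m2 m3 (x:pt) (j k l:nat) : R := Pm (dmu m0 m1 m2 m3 x j) (evec j) k l.
Definition sym2 (a : nat -> nat -> R) (i j : nat) := if Nat.leb i j then a i j else a j i.
Definition OA m x (f g h : nat -> R) G :=
 sumR 6 (fun i => sumR 6 (fun j => f i * Pm m x i j * sumR 6 (fun k => sumR 6 (fun l => sym2 G j k * Pm m x k l * h l)))).
Definition OC m x (f g h : nat -> R) G :=
 sumR 6 (fun i => sumR 6 (fun j => f i * Pm m x i j * sumR 6 (fun k => sumR 6 (fun l => g k * Pm m x k l * sym2 G j l)))).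
Definition OB m m0 m1 m2 m3 x (f g h : nat -> R) :=
 sumR 6 (fun i => sumR 6 (fun j => f i * Pm m x i j * sumR 6 (fun k => sumR 6 (fun l => g k * dPm m0 m1 m2 m3 x j k l * h l)))).
Definition det3 (f g h : nat -> R) :=
  f 0%nat * (g 1%nat * h 2%nat - g 2%nat * h 1%nat) - f 1%nat * (g 0%nat * h 2%nat - g 2%nat * h 0%nat)
  + f 2%nat * (g 0%nat * h 1%nat - g 1%nat * h 0%nat).
Lemma hess m x f g h G : OA m x f g h G + OC m x h f g G = 0.
Proof. unfold OA, OC, Pm, sym2. simpl. ring. Qed.
Lemma first m m0 m1 m2 m3 x f g h : OB m m0 m1 m2 m3 x f g h + OB m m0 m1 m2 m3 x g h f + OB m m0 m1 m2 m3 x h f g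
  = (x 4%nat * m0 - x 3%nat * m1) * det3 f g h.
Proof. unfold OB, dPm, Pm, evec, dmu, det3. simpl. ring. Qed.

Lemma open_Omega D : is_open 3 D -> is_open 6 (Omega D).
Proof.
  intros HD x Hx. destruct (HD _ Hx) as [e [He H]]. exists e. split; auto.
  intros y Hy. apply H. unfold distn, restr in *. simpl in *.
  pose proof (Rabs_pos (x 0%nat - y 0%nat)). pose proof (Rabs_pos (x 1%nat - y 1%nat)).
  pose proof (Rabs_pos (x 2%nat - y 2%nat)). lra.
Qed.

Lemma open_DxR D : is_open 3 D -> is_open 4 (DxR D).
Proof.
  intros HD x Hx. destruct (HD _ Hx) as [e [He H]]. exists e. split; auto.
  intros y Hy. apply H. unfold distn, restr in *. simpl in *.
  pose proof (Rabs_pos (x 3%nat - y 3%nat)). lra.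
Qed.

Lemma Omega_gs D x : Omega D x -> DxR D (gs x).
Proof.
  unfold Omega, DxR. intros H. replace (restr 3 (gs x)) with (restr 3 (fun k => x (3 + k)%nat)). auto.
  extensionality k. unfold restr. destruct k as [|[|[|k]]]; reflexivity.
Qed.

Lemma DxR_upd3 D q u : DxR D (upd q 3 u) <-> DxR D q.
Proof.
  unfold DxR. replace (restr 3 (upd q 3 u)) with (restr 3 q). tauto.
  extensionality k. unfold restr, upd. destruct k as [|[|[|k]]]; reflexivity.
Qed.

Lemma d_upd x j a : derivable_pt_lim (fun t => upd x j t a) (x j) (evec j a).
Proof. unfold upd, evec. destruct (Nat.eqb a j). apply did. apply dconst. Qed.

Lemma Pm_lin m y k l :
  Pm m y k l = sumR 6 (fun a => Pm 0 (evec a) k l * y a) + Pm 1 (fun _ => 0) k l * m.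
Proof.
  unfold Pm, evec.
  destruct k as [|[|[|[|[|[|k]]]]]]; destruct l as [|[|[|[|[|[|l]]]]]]; simpl; ring.
Qed.

Section MU.
Variable D : pt -> Prop.
Hypothesis HD : is_open 3 D.
Variable mu : pt -> R.
Variable MF : list nat -> pt -> R.
Hypothesis M0 : forall x, DxR D x -> MF nil x = mu x.
Hypothesis MC : forall l, cont_on 4 (DxR D) (MF l).
Hypothesis MD : forall l i x, (i < 4)%nat -> DxR D x -> partial_at (MF l) i x (MF (cons i l) x).

Definition mval (x : pt) (a : nat) := MF (cons a nil) (gs x).

Lemma dmu_gs x j : Omega D x -> (j < 6)%nat ->
  partial_at (fun y => mu (gs y)) j x
    (dmu (mval x 0) (mval x 1) (mval x 2) (mval x 3) x j).
Proof.
  intros Hx Hj.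
  apply (partial_local 6 (Omega D) (fun y => MF nil (gs y))); auto.
  apply open_Omega; auto. intros y Hy. apply M0. apply Omega_gs; auto.
  assert (Hp : DxR D (gs x)) by (apply Omega_gs; auto).
  set (p := gs x) in *.
  assert (HB : derivable_pt_lim (fun u => MF nil (upd p 3 u)) (Mdotg x) (mval x 3)).
  { apply (MD nil 3 p); auto. }
  assert (Case1 : forall c, (forall t, gs (upd x j t) = upd p 3 (Mdotg x + c * (t - x j))) ->
     partial_at (fun y => MF nil (gs y)) j x (mval x 3 * c)).
  { intros c E. unfold partial_at.
    eapply dext. intros t. rewrite E. reflexivity. reflexivity.
    apply (dcomp (fun t => Mdotg x + c * (t - x j)) (fun u => MF nil (upd p 3 u))).
    eapply dval; [|apply dplus; [apply dconst|apply (dmult (fun _ => c) (fun t => t - x j)); [apply dconst|]]].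
    2: { eapply dval; [|apply dplus; [apply did|apply dconst]]. reflexivity. }
    ring. replace (Mdotg x + c * (x j - x j)) with (Mdotg x) by ring. auto. }
  destruct (open_upd 4 (DxR D) p 0 (open_DxR D HD) Hp) as [r0 [Hr0 U0]].
  destruct (open_upd 4 (DxR D) p 1 (open_DxR D HD) Hp) as [r1 [Hr1 U1]].
  destruct (open_upd 4 (DxR D) p 2 (open_DxR D HD) Hp) as [r2 [Hr2 U2]].
  assert (Case2 : forall a c r, (a < 3)%nat -> 0 < r -> p a = x j ->
     (forall t, Rabs (t - p a) < r -> DxR D (upd p a t)) ->
     (forall t, gs (upd x j t) = upd (upd p a t) 3 (Mdotg x + c * (t - x j))) ->
     partial_at (fun y => MF nil (gs y)) j x (mval x a + c * mval x 3)).
  { intros a c r Ha Hr Epa Ua E. unfold partial_at.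
    eapply dext. intros t. rewrite E. reflexivity. reflexivity.
    pose proof (chain2 (fun t u => MF nil (upd (upd p a t) 3 u))
      (fun t u => MF (cons a nil) (upd (upd p a t) 3 u)) (mval x 3) (x j) (Mdotg x) c r Hr) as CH.
    simpl in CH. rewrite <- Epa in CH. rewrite upd_same in CH.
    replace (Mdotg x) with (p 3%nat) in CH by reflexivity. rewrite upd_same in CH.
    replace (p 3%nat) with (Mdotg x) in CH by reflexivity.
    rewrite <- Epa. apply CH.
    - intros t u Ht. eapply partial_line. apply MD. lia. apply DxR_upd3. apply Ua. auto.
      rewrite upd_neq by lia. apply upd_eq.
      intros v. rewrite upd_ij_i by lia. reflexivity.
    - auto.
    - pose proof (cont2_of 4 (DxR D) (MF (cons a nil)) p a 3 (open_DxR D HD) Hp (MC _)) as C2.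
      exact C2. }
  destruct j as [|[|[|[|[|[|j]]]]]]; try lia.
  - eapply dval; [|apply (Case1 (x 3%nat))]. simpl. ring.
    intros t. extensionality k. unfold p, gs, upd, Mdotg. destruct k as [|[|[|[|k]]]]; simpl; auto; ring.
  - eapply dval; [|apply (Case1 (x 4%nat))]. simpl. ring.
    intros t. extensionality k. unfold p, gs, upd, Mdotg. destruct k as [|[|[|[|k]]]]; simpl; auto; ring.
  - eapply dval; [|apply (Case1 (x 5%nat))]. simpl. ring.
    intros t. extensionality k. unfold p, gs, upd, Mdotg. destruct k as [|[|[|[|k]]]]; simpl; auto; ring.
  - eapply dval; [|apply (Case2 0%nat (x 0%nat) r0)]. simpl. ring. lia. lra. reflexivity. auto.
    intros t. extensionality k. unfold p, gs, upd, Mdotg. destruct k as [|[|[|[|k]]]]; simpl; auto; ring.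
  - eapply dval; [|apply (Case2 1%nat (x 1%nat) r1)]. simpl. ring. lia. lra. reflexivity. auto.
    intros t. extensionality k. unfold p, gs, upd, Mdotg. destruct k as [|[|[|[|k]]]]; simpl; auto; ring.
  - eapply dval; [|apply (Case2 2%nat (x 2%nat) r2)]. simpl. ring. lia. lra. reflexivity. auto.
    intros t. extensionality k. unfold p, gs, upd, Mdotg. destruct k as [|[|[|[|k]]]]; simpl; auto; ring.
Qed.

Lemma dPi x j k l : Omega D x -> (j < 6)%nat ->
  partial_at (PiMu3 mu k l) j x (dPm (mval x 0) (mval x 1) (mval x 2) (mval x 3) x j k l).
Proof.
  intros Hx Hj. unfold partial_at, dPm.
  rewrite (Pm_lin _ (evec j)).
  eapply dext. intros t. symmetry. apply (Pm_lin (mu (gs (upd x j t))) (upd x j t) k l). reflexivity.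
  apply dplus.
  - apply dsum. intros a Ha. eapply dval; [|apply dmult; [apply dconst|apply d_upd]].
    cbv beta; ring.
  - eapply dval; [|apply dmult; [apply dconst|apply (dmu_gs x j Hx Hj)]]. cbv beta; ring.
Qed.
End MU.

Definition fam n U (f : pt -> R) (F : list nat -> pt -> R) :=
  (forall y, U y -> F nil y = f y) /\ (forall l, cont_on n U (F l)) /\
  (forall l i y, (i < n)%nat -> U y -> partial_at (F l) i y (F (cons i l) y)).

Lemma sumR_plus n f g : sumR n (fun k => f k + g k) = sumR n f + sumR n g.
Proof. induction n; simpl. ring. rewrite IHn. ring. Qed.

Lemma sumR_plus3 m a b c : sumR m (fun j => a j + b j + c j) = sumR m a + sumR m b + sumR m c.
Proof. induction m; simpl. ring. rewrite IHm. ring. Qed.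

Lemma sum2_plus3 n m a b c :
  sumR n (fun i => sumR m (fun j => a i j + b i j + c i j)) =
  sumR n (fun i => sumR m (fun j => a i j)) + sumR n (fun i => sumR m (fun j => b i j))
  + sumR n (fun i => sumR m (fun j => c i j)).
Proof.
  induction n; simpl. ring. rewrite IHn.
  rewrite (sumR_plus3 m (fun j => a n j) (fun j => b n j) (fun j => c n j)). ring.
Qed.

Lemma dsum2_prod3 (a b c : nat -> nat -> R -> R) a' b' c' x :
  (forall k l, (k < 6)%nat -> (l < 6)%nat ->
     derivable_pt_lim (a k l) x (a' k l) /\ derivable_pt_lim (b k l) x (b' k l) /\
     derivable_pt_lim (c k l) x (c' k l)) ->
  derivable_pt_lim (fun t => sumR 6 (fun k => sumR 6 (fun l => a k l t * b k l t * c k l t))) x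
    (sumR 6 (fun k => sumR 6 (fun l => a' k l * b k l x * c k l x + a k l x * b' k l * c k l x
        + a k l x * b k l x * c' k l))).
Proof.
  intros H. apply (dsum 6 (fun k t => sumR 6 (fun l => a k l t * b k l t * c k l t))).
  intros k Hk. apply (dsum 6 (fun l t => a k l t * b k l t * c k l t)).
  intros l Hl. destruct (H k l Hk Hl) as [Ha [Hb Hc]].
  eapply dval; [|apply dmult; [apply dmult; eauto|eauto]]. cbv beta; ring.
Qed.

Section JAC.
Variable D : pt -> Prop.
Hypothesis HD : is_open 3 D.
Variable mu : pt -> R.
Variable MF : list nat -> pt -> R.
Hypothesis M0 : forall x, DxR D x -> MF nil x = mu x.
Hypothesis MC : forall l, cont_on 4 (DxR D) (MF l).
Hypothesis MD : forall l i x, (i < 4)%nat -> DxR D x -> partial_at (MF l) i x (MF (cons i l) x).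

Let U := Omega D.
Let HU : is_open 6 U := open_Omega D HD.
Let Pi := PiMu3 mu.

Lemma pd_sm f F y i : fam 6 U f F -> U y -> (i < 6)%nat -> pd f i y = F (cons i nil) y.
Proof. intros [F0 [FC FD]] Hy Hi. eapply smooth_pd; eauto. Qed.

Definition Val (G H : list nat -> pt -> R) x j :=
  sumR 6 (fun k => sumR 6 (fun l => G (cons j (cons k nil)) x * Pi k l x * H (cons l nil) x
     + G (cons k nil) x * dPm (mval MF x 0) (mval MF x 1) (mval MF x 2) (mval MF x 3) x j k l * H (cons l nil) x
     + G (cons k nil) x * Pi k l x * H (cons j (cons l nil)) x)).

Lemma pb_partial g G h H x j : fam 6 U g G -> fam 6 U h H -> U x -> (j < 6)%nat ->
  partial_at (pbracket 6 Pi g h) j x (Val G H x j).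
Proof.
  intros Hg Hh Hx Hj.
  apply (partial_local 6 U (fun y => sumR 6 (fun k => sumR 6 (fun l =>
          G (cons k nil) y * Pi k l y * H (cons l nil) y)))); auto.
  { intros y Hy. unfold pbracket. apply sumR_ext. intros k Hk. apply sumR_ext. intros l Hl.
    rewrite (pd_sm g G y k), (pd_sm h H y l); auto. }
  unfold partial_at, Val.
  eapply dval; [|apply (dsum2_prod3 (fun k l t => G (cons k nil) (upd x j t)) (fun k l t => Pi k l (upd x j t))
     (fun k l t => H (cons l nil) (upd x j t)))].
  rewrite upd_same. reflexivity.
  intros k l Hk Hl. destruct Hg as [_ [_ GD]]. destruct Hh as [_ [_ HD']].
  split; [|split].
  - apply GD; auto.
  - apply (dPi D HD mu MF M0 MC MD); auto.
  - apply HD'; auto.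
Qed.

Lemma bb_eq f F g G h H x : fam 6 U f F -> fam 6 U g G -> fam 6 U h H -> U x ->
  pbracket 6 Pi f (pbracket 6 Pi g h) x =
  OA (mu (gs x)) x (fun i => F (cons i nil) x) (fun i => G (cons i nil) x) (fun i => H (cons i nil) x)
     (fun a b => G (cons a (cons b nil)) x)
  + OB (mu (gs x)) (mval MF x 0) (mval MF x 1) (mval MF x 2) (mval MF x 3) x
     (fun i => F (cons i nil) x) (fun i => G (cons i nil) x) (fun i => H (cons i nil) x)
  + OC (mu (gs x)) x (fun i => F (cons i nil) x) (fun i => G (cons i nil) x) (fun i => H (cons i nil) x)
     (fun a b => H (cons a (cons b nil)) x).
Proof.
  intros Hf Hg Hh Hx. unfold OA, OB, OC.
  etransitivity. 2: apply sum2_plus3.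
  unfold pbracket at 1. apply sumR_ext. intros i Hi. apply sumR_ext. intros j Hj.
  rewrite (pd_sm f F x i Hf Hx Hi). rewrite (pd_eq _ _ _ _ (pb_partial g G h H x j Hg Hh Hx Hj)).
  unfold Val.
  assert (E : sumR 6 (fun k => sumR 6 (fun l =>
     G (cons j (cons k nil)) x * Pi k l x * H (cons l nil) x
     + G (cons k nil) x * dPm (mval MF x 0) (mval MF x 1) (mval MF x 2) (mval MF x 3) x j k l * H (cons l nil) x
     + G (cons k nil) x * Pi k l x * H (cons j (cons l nil)) x)) =
     sumR 6 (fun k => sumR 6 (fun l =>
     sym2 (fun a b => G (cons a (cons b nil)) x) j k * Pm (mu (gs x)) x k l * H (cons l nil) x
     + G (cons k nil) x * dPm (mval MF x 0) (mval MF x 1) (mval MF x 2) (mval MF x 3) x j k l * H (cons l nil) x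
     + G (cons k nil) x * Pm (mu (gs x)) x k l * sym2 (fun a b => H (cons a (cons b nil)) x) j l))).
  { apply sumR_ext. intros k Hk. apply sumR_ext. intros l Hl.
    destruct Hg as [_ [GC GD]]. destruct Hh as [_ [HC HD']].
    unfold sym2. destruct (Nat.leb j k); destruct (Nat.leb j l);
    rewrite ?(smooth_schwarz 6 U G x j k), ?(smooth_schwarz 6 U H x j l); auto;
    unfold Pi, Pm, PiMu3; reflexivity. }
  rewrite E. rewrite sum2_plus3. cbv beta. change (Pi i j x) with (Pm (mu (gs x)) x i j). ring.
Qed.

Lemma jac_formula f F g G h H x : fam 6 U f F -> fam 6 U g G -> fam 6 U h H -> U x ->
  pbracket 6 Pi f (pbracket 6 Pi g h) x + pbracket 6 Pi g (pbracket 6 Pi h f) x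
  + pbracket 6 Pi h (pbracket 6 Pi f g) x =
  (x 4%nat * mval MF x 0 - x 3%nat * mval MF x 1) *
  det3 (fun i => F (cons i nil) x) (fun i => G (cons i nil) x) (fun i => H (cons i nil) x).
Proof.
  intros Hf Hg Hh Hx.
  rewrite (bb_eq f F g G h H x), (bb_eq g G h H f F x), (bb_eq h H f F g G x); auto.
  set (f1 := fun i => F (cons i nil) x). set (g1 := fun i => G (cons i nil) x).
  set (h1 := fun i => H (cons i nil) x).
  pose proof (hess (mu (gs x)) x f1 g1 h1 (fun a b => G (cons a (cons b nil)) x)).
  pose proof (hess (mu (gs x)) x g1 h1 f1 (fun a b => H (cons a (cons b nil)) x)).
  pose proof (hess (mu (gs x)) x h1 f1 g1 (fun a b => F (cons a (cons b nil)) x)).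
  pose proof (first (mu (gs x)) (mval MF x 0) (mval MF x 1) (mval MF x 2) (mval MF x 3) x f1 g1 h1).
  lra.
Qed.
End JAC.

Lemma smooth_coind n U (S : (pt -> R) -> Prop) :
  (forall f, S f -> cont_on n U f) ->
  (forall f i, S f -> (i < n)%nat -> exists g, S g /\ forall x, U x -> partial_at f i x (g x)) ->
  forall f, S f -> smooth_on n U f.
Proof.
  intros HC HD f Sf.
  set (P := fun i g d => S d /\ forall x, U x -> partial_at g i x (d x)).
  set (Dv := fun i g => if Nat.ltb i n then epsilon (inhabits (fun _ : pt => 0)) (P i g) else g).
  set (F := fix F (l : list nat) : pt -> R := match l with nil => f | cons i l' => Dv i (F l') end).
  assert (Inv : forall l, S (F l)).
  { induction l as [|i l IH]; simpl. auto. unfold Dv. destruct (Nat.ltb_spec i n).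
    - destruct (HD _ _ IH H) as [g Hg].
      exact (proj1 (epsilon_spec (inhabits (fun _ : pt => 0)) (P i (F l)) (ex_intro _ g Hg))).
    - auto. }
  exists F. split; [|split].
  - intros; reflexivity.
  - intros l. apply HC, Inv.
  - intros l i x Hi Hx. simpl. unfold Dv.
    destruct (Nat.ltb_spec i n); [|lia].
    destruct (HD _ _ (Inv l) H) as [g Hg].
    exact (proj2 (epsilon_spec (inhabits (fun _ : pt => 0)) (P i (F l)) (ex_intro _ g Hg)) x Hx).
Qed.

Lemma smooth1_coind (S : (R -> R) -> Prop) :
  (forall f, S f -> exists g, S g /\ forall x, derivable_pt_lim f x (g x)) ->
  forall f, S f -> smooth1 f.
Proof.
  intros HD f Sf.
  set (P := fun g d => S d /\ forall x, derivable_pt_lim g x (d x)).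
  set (Dv := fun g => epsilon (inhabits (fun _ : R => 0)) (P g)).
  set (F := fix F (k : nat) : R -> R := match k with O => f | S k' => Dv (F k') end).
  assert (Inv : forall k, S (F k)).
  { induction k; simpl. auto. unfold Dv. destruct (HD _ IHk) as [g Hg].
    exact (proj1 (epsilon_spec (inhabits (fun _ : R => 0)) (P (F k)) (ex_intro _ g Hg))). }
  exists F. split. intros; reflexivity.
  intros k x. simpl. unfold Dv. destruct (HD _ (Inv k)) as [g Hg].
  exact (proj2 (epsilon_spec (inhabits (fun _ : R => 0)) (P (F k)) (ex_intro _ g Hg)) x).
Qed.

Lemma smooth1_deriv phi : smooth1 phi -> exists phi', smooth1 phi' /\ forall x, derivable_pt_lim phi x (phi' x).
Proof.
  intros [F [F0 FD]]. exists (F 1%nat). split.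
  - exists (fun k => F (S k)). split. intros; reflexivity. intros; apply FD.
  - intros x. eapply dext; [intros t; apply F0|reflexivity|apply FD].
Qed.

Lemma smooth1_antider g A : smooth1 g -> (forall x, derivable_pt_lim A x (g x)) -> smooth1 A.
Proof.
  intros [G [G0 GD]] HA. exists (fun k => match k with O => A | S k' => G k' end). split.
  - intros; reflexivity.
  - intros [|k] x. rewrite G0. apply HA. apply GD.
Qed.

Section INV.
Variable delta : R -> R.
Hypothesis Hd : smooth1 delta.
Hypothesis Hnz : forall s, delta s <> 0.
Inductive g1 : (R -> R) -> Prop :=
| g1_sm phi : smooth1 phi -> g1 phi
| g1_mult f g : g1 f -> g1 g -> g1 (fun t => f t * g t)
| g1_plus f g : g1 f -> g1 g -> g1 (fun t => f t + g t)
| g1_opp f : g1 f -> g1 (fun t => - f t)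
| g1_inv : g1 (fun t => / delta t).

Lemma g1_deriv f : g1 f -> exists g, g1 g /\ forall x, derivable_pt_lim f x (g x).
Proof.
  induction 1 as [phi Hphi | f g Hf IHg1_1 Hg IHg1_2 | f g Hf IHg1_1 Hg IHg1_2 | f Hf IHg1 | ].
  - destruct (smooth1_deriv phi Hphi) as [p [Hp Dp]]. exists p. split. constructor; auto. auto.
  - destruct IHg1_1 as [f' [Hf' Df]]. destruct IHg1_2 as [g' [Hg' Dg]].
    exists (fun t => f' t * g t + f t * g' t). split. apply g1_plus; apply g1_mult; auto.
    intros x. apply dmult; auto.
  - destruct IHg1_1 as [f' [Hf' Df]]. destruct IHg1_2 as [g' [Hg' Dg]].
    exists (fun t => f' t + g' t). split. apply g1_plus; auto. intros; apply dplus; auto.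
  - destruct IHg1 as [f' [Hf' Df]]. exists (fun t => - f' t). split. apply g1_opp; auto.
    intros; apply dopp; auto.
  - destruct (smooth1_deriv delta Hd) as [d' [Hd' Dd]].
    exists (fun t => - (d' t * (/ delta t * / delta t))). split.
    + apply g1_opp. apply g1_mult. apply g1_sm; auto. apply g1_mult; apply g1_inv.
    + intros x. pose proof (derivable_pt_lim_div (fct_cte 1) delta x 0 (d' x)
          (derivable_pt_lim_const 1 x) (Dd x) (Hnz x)) as H.
      eapply dext; [| |exact H]. intros t. unfold div_fct, fct_cte. field. apply Hnz.
      unfold fct_cte, Rsqr. field. apply Hnz.
Qed.

Lemma smooth1_inv : smooth1 (fun t => / delta t).
Proof. apply (smooth1_coind g1). apply g1_deriv. apply g1_inv. Qed.
End INV.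

Lemma cont_const n U c : cont_on n U (fun _ => c).
Proof. intros x Hx eps He. exists 1. split. lra. intros. replace (c - c) with 0 by ring. rewrite Rabs_R0; auto. Qed.

Lemma cont_coord n U a : (a < n)%nat -> cont_on n U (fun y => y a).
Proof.
  intros Ha x Hx eps He. exists eps. split; auto. intros y Hy Hd.
  pose proof (distn_coord n y x a Ha). rewrite distn_sym in H. lra.
Qed.

Lemma cont_plus n U f g : cont_on n U f -> cont_on n U g -> cont_on n U (fun y => f y + g y).
Proof.
  intros Hf Hg x Hx eps He.
  destruct (Hf x Hx (eps/2)) as [d1 [Hd1 H1]]. lra.
  destruct (Hg x Hx (eps/2)) as [d2 [Hd2 H2]]. lra.
  exists (Rmin d1 d2). split. apply Rmin_pos; auto.
  intros y Hy Hd. pose proof (Rmin_l d1 d2). pose proof (Rmin_r d1 d2).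
  specialize (H1 y Hy ltac:(lra)). specialize (H2 y Hy ltac:(lra)).
  replace (f y + g y - (f x + g x)) with ((f y - f x) + (g y - g x)) by ring.
  pose proof (Rabs_triang (f y - f x) (g y - g x)). lra.
Qed.

Lemma cont_mult n U f g : cont_on n U f -> cont_on n U g -> cont_on n U (fun y => f y * g y).
Proof.
  intros Hf Hg x Hx eps He.
  set (K := Rabs (f x) + Rabs (g x) + 1).
  assert (HK : 0 < K) by (unfold K; pose proof (Rabs_pos (f x)); pose proof (Rabs_pos (g x)); lra).
  set (e1 := Rmin 1 (eps / (2 * K))).
  assert (He1 : 0 < e1) by (unfold e1; apply Rmin_pos; [lra|apply Rdiv_lt_0_compat; lra]).
  assert (He1' : e1 * K <= eps / 2).
  { unfold e1. pose proof (Rmin_r 1 (eps / (2 * K))).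
    apply Rmult_le_compat_r with (r := K) in H; [|lra].
    replace (eps / (2 * K) * K) with (eps / 2) in H by (field; lra). lra. }
  assert (He1'' : e1 <= 1) by (unfold e1; apply Rmin_l).
  destruct (Hf x Hx e1 He1) as [d1 [Hd1 H1]].
  destruct (Hg x Hx e1 He1) as [d2 [Hd2 H2]].
  exists (Rmin d1 d2). split. apply Rmin_pos; auto.
  intros y Hy Hd. pose proof (Rmin_l d1 d2). pose proof (Rmin_r d1 d2).
  specialize (H1 y Hy ltac:(lra)). specialize (H2 y Hy ltac:(lra)).
  replace (f y * g y - f x * g x) with ((f y - f x) * g y + f x * (g y - g x)) by ring.
  pose proof (Rabs_triang ((f y - f x) * g y) (f x * (g y - g x))).
  rewrite !Rabs_mult in H3.
  assert (Rabs (g y) <= Rabs (g x) + 1).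
  { replace (g y) with (g x + (g y - g x)) by ring. pose proof (Rabs_triang (g x) (g y - g x)). lra. }
  pose proof (Rabs_pos (f y - f x)). pose proof (Rabs_pos (f x)). pose proof (Rabs_pos (g y - g x)).
  pose proof (Rabs_pos (g y)).
  assert (Rabs (f y - f x) * Rabs (g y) <= e1 * (Rabs (g x) + 1)) by (apply Rmult_le_compat; lra).
  assert (Rabs (f x) * Rabs (g y - g x) <= Rabs (f x) * e1) by (apply Rmult_le_compat_l; lra).
  unfold K in He1'. lra.
Qed.

Lemma cont_comp n U phi f : (forall z, exists l, derivable_pt_lim phi z l) -> cont_on n U f ->
  cont_on n U (fun y => phi (f y)).
Proof.
  intros Hp Hf x Hx eps He. destruct (Hp (f x)) as [l Hl].
  destruct (deriv_cont phi (f x) l Hl eps He) as [d1 [Hd1 H1]].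
  destruct (Hf x Hx d1 Hd1) as [d [Hd H]]. exists d. split; [exact Hd|].
  intros y Hy Hyd. apply H1. apply H; auto.
Qed.

Section GEN.
Variable n : nat.
Variable U : pt -> Prop.
Inductive gen : (pt -> R) -> Prop :=
| gen_const c : gen (fun _ => c)
| gen_coord a : (a < n)%nat -> gen (fun y => y a)
| gen_plus f g : gen f -> gen g -> gen (fun y => f y + g y)
| gen_mult f g : gen f -> gen g -> gen (fun y => f y * g y)
| gen_comp phi f : smooth1 phi -> gen f -> gen (fun y => phi (f y)).

Lemma gen_cont f : gen f -> cont_on n U f.
Proof.
  induction 1 as [c|a Ha|f g Hf IH1 Hg IH2|f g Hf IH1 Hg IH2|phi f Hphi Hf IH].
  - apply cont_const.
  - apply cont_coord; auto.
  - apply cont_plus; auto.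
  - apply cont_mult; auto.
  - apply cont_comp; auto. intros z. destruct (smooth1_deriv phi Hphi) as [p [_ Dp]]. eauto.
Qed.

Lemma gen_deriv f i : gen f -> (i < n)%nat -> exists g, gen g /\ forall x, U x -> partial_at f i x (g x).
Proof.
  intros Hf Hi. induction Hf as [c|a Ha|f g Hf1 IHHf1 Hf2 IHHf2|f g Hf1 IHHf1 Hf2 IHHf2|phi f H Hf IHHf].
  - exists (fun _ => 0). split. constructor. intros; unfold partial_at; apply (dconst c).
  - exists (fun _ => evec i a). split. constructor. intros x _. unfold partial_at. apply d_upd.
  - destruct IHHf1 as [f' [Hf' Df]]. destruct IHHf2 as [g' [Hg' Dg]].
    exists (fun y => f' y + g' y). split. apply gen_plus; auto. intros x Hx. unfold partial_at in *. apply dplus; auto.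
  - destruct IHHf1 as [f' [Hf' Df]]. destruct IHHf2 as [g' [Hg' Dg]].
    exists (fun y => f' y * g y + f y * g' y). split. apply gen_plus; apply gen_mult; auto.
    intros x Hx. unfold partial_at. eapply dval; [|apply dmult; [apply Df|apply Dg]; auto].
    cbv beta; rewrite upd_same; reflexivity.
  - destruct IHHf as [f' [Hf' Df]]. destruct (smooth1_deriv phi H) as [p [Hp Dp]].
    exists (fun y => p (f y) * f' y). split. apply gen_mult; auto. apply gen_comp; auto.
    intros x Hx. unfold partial_at. eapply dval; [|apply dcomp; [apply Df; auto|apply Dp]].
    cbv beta; rewrite upd_same; reflexivity.
Qed.

Lemma gen_smooth f : gen f -> smooth_on n U f.
Proof. apply (smooth_coind n U gen). apply gen_cont. intros; apply gen_deriv; auto. Qed.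
End GEN.

Lemma cont_eq0 n U f x y : cont_on n U f -> U x -> U y -> distn n x y = 0 -> f y = f x.
Proof.
  intros Hf Hx Hy Hd. destruct (Req_dec (f y) (f x)) as [|Hne]; auto. exfalso.
  assert (He : 0 < Rabs (f y - f x)) by (apply Rabs_pos_lt; lra).
  destruct (Hf x Hx _ He) as [d [Hd0 H]]. specialize (H y Hy ltac:(lra)). lra.
Qed.

Lemma coord_pd a i x : pd (fun y => y a) i x = evec i a.
Proof. apply pd_eq. unfold partial_at. apply d_upd. Qed.

Lemma part1 (D : pt -> Prop) : is_open 3 D ->
    (forall p, D p -> ~ (p 0%nat = 0 /\ p 1%nat = 0 /\ p 2%nat = 0)) ->
    (forall mu3 : pt -> R, smooth_on 4 (DxR D) mu3 ->
       (defines_Poisson 6 (Omega D) (PiMu3 mu3) <->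
        forall p, DxR D p -> p 0%nat * pd mu3 1 p - p 1%nat * pd mu3 0 p = 0)).
Proof.
  intros HD Hnz mu [MF [M0 [MC MD]]].
  assert (HU : is_open 6 (Omega D)) by (apply open_Omega; auto).
  split.
  - intros HP p Hp.
    assert (Hn : 0 < p 0%nat * p 0%nat + p 1%nat * p 1%nat + p 2%nat * p 2%nat).
    { specialize (Hnz _ Hp). unfold restr in Hnz. simpl in Hnz.
      destruct (Req_dec (p 0%nat) 0); destruct (Req_dec (p 1%nat) 0); destruct (Req_dec (p 2%nat) 0);
      try (exfalso; apply Hnz; auto; fail); nra. }
    set (n2 := p 0%nat * p 0%nat + p 1%nat * p 1%nat + p 2%nat * p 2%nat) in *.
    set (x := fun k => match k with 0 => p 3%nat * p 0%nat / n2 | 1 => p 3%nat * p 1%nat / n2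
                 | 2 => p 3%nat * p 2%nat / n2 | 3 => p 0%nat | 4 => p 1%nat | 5 => p 2%nat | _ => 0 end).
    assert (Hx : Omega D x).
    { unfold Omega. replace (restr 3 (fun k => x (3 + k)%nat)) with (restr 3 p). exact Hp.
      extensionality k. unfold restr. destruct k as [|[|[|k]]]; reflexivity. }
    assert (Hs : forall a, (a < 6)%nat -> smooth_on 6 (Omega D) (fun y => y a)).
    { intros a Ha. apply gen_smooth. apply gen_coord. auto. }
    destruct (Hs 0%nat ltac:(lia)) as [FF HF]. destruct (Hs 1%nat ltac:(lia)) as [GG HG].
    destruct (Hs 2%nat ltac:(lia)) as [HH HHf].
    pose proof (HP _ _ _ (Hs 0%nat ltac:(lia)) (Hs 1%nat ltac:(lia)) (Hs 2%nat ltac:(lia)) x Hx) as J.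
    rewrite (jac_formula D HD mu MF M0 MC MD _ FF _ GG _ HH x HF HG HHf Hx) in J.
    assert (Hdet : det3 (fun i => FF (cons i nil) x) (fun i => GG (cons i nil) x) (fun i => HH (cons i nil) x) = 1).
    { unfold det3. rewrite <- !(pd_sm D HD _ _ x _ HF Hx), <- !(pd_sm D HD _ _ x _ HG Hx),
        <- !(pd_sm D HD _ _ x _ HHf Hx) by lia.
      rewrite !coord_pd. unfold evec. simpl. ring. }
    rewrite Hdet in J.
    assert (Hg : DxR D (gs x)) by (apply Omega_gs; auto).
    assert (Hd0 : distn 4 (gs x) p = 0).
    { unfold distn, gs, Mdotg, x. simpl.
      replace (p 3%nat * p 0%nat / n2 * p 0%nat + p 3%nat * p 1%nat / n2 * p 1%nat + p 3%nat * p 2%nat / n2 * p 2%nat)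
        with (p 3%nat) by (unfold n2; field; unfold n2 in Hn; lra).
      rewrite !Rminus_diag, !Rabs_R0. ring. }
    rewrite (smooth_pd 4 (DxR D) mu MF 1 p), (smooth_pd 4 (DxR D) mu MF 0 p); auto; try apply open_DxR; auto.
    rewrite (cont_eq0 4 (DxR D) (MF (cons 1%nat nil)) (gs x) p), (cont_eq0 4 (DxR D) (MF (cons 0%nat nil)) (gs x) p); auto.
    unfold mval in J. change (x 4%nat) with (p 1%nat) in J. change (x 3%nat) with (p 0%nat) in J. nra.
  - intros Hc f g h Hf Hg Hh x Hx.
    destruct Hf as [FF HF]. destruct Hg as [GG HG]. destruct Hh as [HH HHf].
    rewrite (jac_formula D HD mu MF M0 MC MD _ FF _ GG _ HH x HF HG HHf Hx).
    assert (Hgx : DxR D (gs x)) by (apply Omega_gs; auto).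
    specialize (Hc _ Hgx).
    rewrite (smooth_pd 4 (DxR D) mu MF 1 (gs x)), (smooth_pd 4 (DxR D) mu MF 0 (gs x)) in Hc; auto;
      try apply open_DxR; auto.
    unfold mval. simpl in Hc. replace (x 4%nat * MF (cons 0%nat nil) (gs x) - x 3%nat * MF (cons 1%nat nil) (gs x)) with 0 by lra.
    ring.
Qed.

Theorem mainTheorem12 :
  forall D : pt -> Prop,
    is_open 3 D ->
    (forall p, D p -> ~ (p 0%nat = 0 /\ p 1%nat = 0 /\ p 2%nat = 0)) ->
    (forall mu3 : pt -> R, smooth_on 4 (DxR D) mu3 ->
       (defines_Poisson 6 (Omega D) (PiMu3 mu3) <->
        forall p, DxR D p -> p 0%nat * pd mu3 1 p - p 1%nat * pd mu3 0 p = 0))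
    /\
    (forall beta delta Delta B : R -> R,
       smooth1 beta -> smooth1 delta -> (forall s, delta s <> 0) ->
       (forall s, derivable_pt_lim Delta s (/ delta s)) ->
       (forall s, derivable_pt_lim B s (beta s)) ->
       let mu3 := fun p : pt => beta (p 2%nat) * delta (p 3%nat) in
       defines_Poisson 6 (Omega D) (PiMu3 mu3) /\
       is_Casimir 6 (Omega D) (PiMu3 mu3) (fun x => Delta (Mdotg x) + B (x 5%nat))).
Proof.
  intros D HD Hnz. split. apply part1; auto.
  intros beta delta Delta B Hb Hd Hdnz HDelta HB mu3.
  assert (Hmu : smooth_on 4 (DxR D) mu3).
  { apply gen_smooth. unfold mu3. apply gen_mult; apply gen_comp; auto; apply gen_coord; lia. }
  split.
  - apply (proj2 (part1 D HD Hnz mu3 Hmu)). intros p Hp.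
    rewrite (pd_eq mu3 1 p 0), (pd_eq mu3 0 p 0). ring.
    + unfold partial_at, mu3, upd. simpl. apply (dconst (beta (p 2%nat) * delta (p 3%nat))).
    + unfold partial_at, mu3, upd. simpl. apply (dconst (beta (p 2%nat) * delta (p 3%nat))).
  - assert (SD : smooth1 Delta) by (apply (smooth1_antider (fun s => / delta s)); auto; apply smooth1_inv; auto).
    assert (SB : smooth1 B) by (apply (smooth1_antider beta); auto).
    split.
    + apply gen_smooth. apply gen_plus. apply gen_comp; auto. unfold Mdotg.
      apply gen_plus; [apply gen_plus|]; apply gen_mult; apply gen_coord; lia.
      apply gen_comp; auto. apply gen_coord; lia.
    + intros x Hx i Hi.
      assert (HC : forall j, pd (fun x => Delta (Mdotg x) + B (x 5%nat)) j x =
        / delta (Mdotg x) * (evec j 0%nat * x 3%nat + x 0%nat * evec j 3%nat + (evec j 1%nat * x 4%nat + x 1%nat * evec j 4%nat)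
           + (evec j 2%nat * x 5%nat + x 2%nat * evec j 5%nat)) + beta (x 5%nat) * evec j 5%nat).
      { intros j. apply pd_eq. unfold partial_at.
        assert (H1 : derivable_pt_lim (fun t => Mdotg (upd x j t)) (x j)
          (evec j 0%nat * upd x j (x j) 3%nat + upd x j (x j) 0%nat * evec j 3%nat
           + (evec j 1%nat * upd x j (x j) 4%nat + upd x j (x j) 1%nat * evec j 4%nat)
           + (evec j 2%nat * upd x j (x j) 5%nat + upd x j (x j) 2%nat * evec j 5%nat))).
        { unfold Mdotg. apply dplus; [apply dplus|]; apply dmult; apply d_upd. }
        pose proof (dcomp _ Delta _ _ _ H1 (HDelta _)) as H2.
        pose proof (dcomp (fun t => upd x j t 5%nat) B _ _ _ (d_upd x j 5) (HB _)) as H3.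
        eapply dval; [|apply dplus; [exact H2|exact H3]].
        cbv beta. rewrite !upd_same. unfold Mdotg. ring. }
      rewrite (sumR_ext 6 _ (fun j => PiMu3 mu3 i j x * (/ delta (Mdotg x) * (evec j 0%nat * x 3%nat + x 0%nat * evec j 3%nat + (evec j 1%nat * x 4%nat + x 1%nat * evec j 4%nat)
           + (evec j 2%nat * x 5%nat + x 2%nat * evec j 5%nat)) + beta (x 5%nat) * evec j 5%nat))).
      2: { intros j Hj. rewrite HC. reflexivity. }
      assert (Hdn : delta (Mdotg x) <> 0) by auto.
      unfold PiMu3, PiMu, mu3, evec, gs. unfold Mdotg in *.
      destruct i as [|[|[|[|[|[|i]]]]]]; try lia; simpl; field; auto.
Qed.
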